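(* Let $d\geq1$, $T\geq2$, and let $x^0,x^1\in(\mathbb{R}^d)^T$ satisfy $x^0_{t,j}\neq x^1_{t,j}$ for all $t,j$. For $1\le t\le T$ let $\mathcal{E}_t:=(\{0,1\}^d)^t$ and for $\vec\varepsilon_t=(\varepsilon_{s,j})_{s\le t,\,j\le d}\in\mathcal{E}_t$ let $x^{\vec\varepsilon_t}:=(x^{\varepsilon_{s,j}}_{s,j})_{s\le t,\,j\le d}$; let $D:=\{x^{\vec\varepsilon_T}:\vec\varepsilon_T\in\mathcal{E}_T\}$. Consider the real variables $u_{t,j}(\vec\varepsilon_t)$ for $1\le t\le T-1$, $1\le j\le d$, $\vec\varepsilon_t\in\mathcal{E}_t$, together with $w_1^0,w_1^1$ and $w_j^1$ for $2\le j\le d$ (a total of $d\sum_{t=1}^{T-1}2^{dt}+d+1$ variables), and the linear map $L_T$ sending them to the vector indexed by $\vec\varepsilon_T\in\mathcal{E}_T$ with entries $\sum_{t=1}^{T-1}\sum_{j=1}^d u_{t,j}(\vec\varepsilon_t)\,(x^{\varepsilon_{t+1,j}}_{t+1,j}-x^{\varepsilon_{t,j}}_{t,j})+w_1^{\varepsilon_{T,1}}+\sum_{j=2}^d \varepsilon_{T,j}\,w_j^1,$ where $\vec\varepsilon_t$ denotes the truncation of $\vec\varepsilon_T$ to its first $t$ blocks. Then the matrix of $L_T$ (with respect to any ordering of rows and columns) has full column rank, i.e. $L_T$ is injective.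
   Context: This linear map encodes the evaluation on the cuboid $D$ of $V=\sum_{t=1}^{T-1}\sum_{j=1}^d\hat h_{t,j}(x_1,\dots,x_t)(x_{t+1,j}-x_{t,j})+\sum_{j=1}^d\hat g_j(x_{T,j})$ under the normalization $\hat g_j(x^0_{T,j})=0$ for $j\ge2$, with $u_{t,j}(\vec\varepsilon_t)=\hat h_{t,j}(x^{\vec\varepsilon_t})$, $w_1^k=\hat g_1(x^k_{T,1})$, $w^1_j=\hat g_j(x^1_{T,j})$. *)

(* Defs.v *)
From HB Require Import structures.
From mathcomp Require Import all_boot all_order all_algebra.
From mathcomp Require Import reals.
Set Implicit Arguments. Unset Strict Implicit. Unset Printing Implicit Defensive.
Import Order.TTheory GRing.Theory Num.Theory.
Local Open Scope ring_scope.

(* 0-based indexing: times 'I_T = {0,..,T-1} (paper: 1..T), coordinates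
   'I_d (paper: 1..d).  A sign pattern eps_T in E_T = ({0,1}^d)^T is a
   {ffun 'I_T -> {ffun 'I_d -> bool}}. *)

Lemma succ_ord_proof (n : nat) (i : 'I_n.-1) : (i.+1 < n)%N.
Proof. have := ltn_ord i. by case: n i => //= n i; rewrite ltnS. Qed.

Definition succ_ord (n : nat) (i : 'I_n.-1) : 'I_n := Ordinal (succ_ord_proof i).

Definition pred_widen (n : nat) (i : 'I_n.-1) : 'I_n := widen_ord (leq_pred n) i.

Lemma pred_lt (n : nat) : (0 < n)%N -> (n.-1 < n)%N.
Proof. by case: n. Qed.

(* truncation of eps_T to its first t+1 blocks, for t : 'I_T.-1
   (paper index t+1 in 1..T-1) *)
Definition trunc (T d : nat) (t : 'I_T.-1) (e : {ffun 'I_T -> {ffun 'I_d -> bool}})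
  : {ffun 'I_t.+1 -> {ffun 'I_d -> bool}} :=
  [ffun s : 'I_t.+1 => e (widen_ord (ltnW (succ_ord_proof t)) s)].

Definition xsel (R : Type) (T d : nat) (x0 x1 : 'I_T -> 'I_d -> R) (b : bool)
  (t : 'I_T) (j : 'I_d) : R := if b then x1 t j else x0 t j.

(* The linear map L_T.  u t j is u_{t+1,j+1} (paper), defined on E_{t+1};
   w10 = w_1^0, w11 = w_1^1, w j = w_{j+2}^1 for j : 'I_d.-1;
   tl = last time T-1 (paper T); j0 = first coordinate (paper 1). *)
Definition LT (R : realType) (T d : nat) (x0 x1 : 'I_T -> 'I_d -> R)
  (tl : 'I_T) (j0 : 'I_d)
  (u : forall t : 'I_T.-1, 'I_d -> {ffun 'I_t.+1 -> {ffun 'I_d -> bool}} -> R)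
  (w10 w11 : R) (w : 'I_d.-1 -> R)
  (e : {ffun 'I_T -> {ffun 'I_d -> bool}}) : R :=
  \sum_(t : 'I_T.-1) \sum_(j : 'I_d)
     u t j (trunc t e) *
       (xsel x0 x1 (e (succ_ord t) j) (succ_ord t) j
        - xsel x0 x1 (e (pred_widen t) j) (pred_widen t) j)
  + (if e tl j0 then w11 else w10)
  + \sum_(j : 'I_d.-1) (nat_of_bool (e tl (succ_ord j)))%:R * w j.

(* Main.v *)
Require Import Defs.
From HB Require Import structures.
From mathcomp Require Import all_boot all_order all_algebra.
From mathcomp Require Import reals.
From mathcomp Require Import ring lra.
Import Order.TTheory GRing.Theory Num.Theory.
Local Open Scope ring_scope.

Definition upd (e : nat -> nat -> bool) m j (b : bool) : nat -> nat -> bool :=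
  fun s i => if (s == m) && (i == j) then b else e s i.

Lemma flip_sum (R : realType) d (F : nat -> bool -> R) (f : nat -> bool) j :
  (j < d)%N ->
  \sum_(i < d) F i (if i == j :> nat then true else f i)
  - \sum_(i < d) F i (if i == j :> nat then false else f i) = F j true - F j false.
Proof.
Proof.
move=> hj; rewrite -sumrB (bigD1 (Ordinal hj)) //= eqxx.
rewrite big1 ?addr0 // => i hi.
have -> : (i == j :> nat) = false; last by rewrite subrr.
by apply/negbTE; move: hi; apply: contra => /eqP h; apply/eqP/val_inj.
Qed.

Lemma gen_sep (R : realType) d (A : nat -> nat -> (nat -> nat -> bool) -> R)
  (X : nat -> nat -> bool -> R) :
 (forall t j, X t j true != X t j false) ->
 (forall t j e e', (forall s i, (s <= t)%N -> e s i = e' s i) -> A t j e = A t j e') ->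
 forall n (h : nat -> bool -> R) (C : R),
 (forall e, \sum_(t < n) \sum_(j < d) A t j e * (X t.+1 j (e t.+1 j) - X t j (e t j))
     + \sum_(j < d) h j (e n j) + C = 0) ->
 (forall t j e, (t < n)%N -> (j < d)%N -> A t j e = 0) /\
 (forall j, (j < d)%N -> h j true = h j false) /\ \sum_(j < d) h j false + C = 0.
Proof.
move=> hX loc; elim=> [|n IH] h C H.
  split; first by [].
  split; last by have := H (fun _ _ => false); rewrite big_ord0 add0r.
  move=> j hj.
  have E1 := H (upd (fun _ _ => false) 0 j true).
  have E0 := H (upd (fun _ _ => false) 0 j false).
  rewrite big_ord0 add0r /upd /= in E1.
  rewrite big_ord0 add0r /upd /= in E0.
  have := @flip_sum R d h (fun _ => false) j hj.
  lra.
pose k j := (h j false - h j true) / (X n.+1 j true - X n.+1 j false).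
have Hk : forall j e, (j < d)%N -> A n j e = k j.
  move=> j e hj.
  pose P := \sum_(t < n) \sum_(i < d) A t i e * (X t.+1 i (e t.+1 i) - X t i (e t i)) + C.
  pose F i b := A n i e * (X n.+1 i b - X n i (e n i)) + h i b.
  have E : forall b, \sum_(t < n.+1) \sum_(i < d) A t i (upd e n.+1 j b) *
        (X t.+1 i (upd e n.+1 j b t.+1 i) - X t i (upd e n.+1 j b t i))
      + \sum_(i < d) h i (upd e n.+1 j b n.+1 i) + C
      = P + \sum_(i < d) F i (if i == j :> nat then b else e n.+1 i).
    move=> b; rewrite big_ord_recr /= /P /F big_split /=.
    have -> : \sum_(i < n) \sum_(i0 < d) A i i0 (upd e n.+1 j b) *
        (X i.+1 i0 (upd e n.+1 j b i.+1 i0) - X i i0 (upd e n.+1 j b i i0))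
      = \sum_(t < n) \sum_(i < d) A t i e * (X t.+1 i (e t.+1 i) - X t i (e t i)).
      apply: eq_bigr => t _; apply: eq_bigr => i _.
      have lt := ltn_ord t.
      rewrite /upd (loc t i _ e); last first.
        move=> s i0 hs; have -> : (s == n.+1) = false; last by [].
        apply/negbTE; rewrite neq_ltn; apply/orP; left; rewrite ltnS.
        exact: leq_trans hs (ltnW lt).
      have -> : (t.+1 == n.+1) = false by rewrite eqSS; apply/negbTE; rewrite neq_ltn lt.
      have -> : (nat_of_ord t == n.+1) = false.
        by apply/negbTE; rewrite neq_ltn ltnS (ltnW lt).
      by [].
    have -> : \sum_(i < d) A n i (upd e n.+1 j b) *
        (X n.+1 i (upd e n.+1 j b n.+1 i) - X n i (upd e n.+1 j b n i))
      = \sum_(i < d) A n i e * (X n.+1 i (if i == j :> nat then b else e n.+1 i) - X n i (e n i)).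
      apply: eq_bigr => i _; rewrite /upd eqxx /= (loc n i _ e); last first.
        move=> s i0 hs; have -> : (s == n.+1) = false; last by [].
        by apply/negbTE; rewrite neq_ltn ltnS hs.
      by have -> : (n == n.+1) = false by elim: n {IH H P F k}.
    have -> : \sum_(i < d) h i (upd e n.+1 j b n.+1 i)
        = \sum_(i < d) h i (if i == j :> nat then b else e n.+1 i).
      by apply: eq_bigr => i _; rewrite /upd eqxx.
    ring.
  have E1 := E true; have E0 := E false.
  rewrite H in E1; rewrite H in E0.
  have D := @flip_sum R d F (e n.+1) j hj.
  have D0 : F j true - F j false = 0 by lra.
  rewrite /F in D0.
  have hXj := hX n.+1 j.
  rewrite /k.
  apply: (@mulIf _ (X n.+1 j true - X n.+1 j false)); first by rewrite subr_eq0.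
  rewrite mulfVK; last by rewrite subr_eq0.
  have -> : A n j e * (X n.+1 j true - X n.+1 j false) = (A n j e * (X n.+1 j true - X n j (e n j)) + h j true - (A n j e * (X n.+1 j false - X n j (e n j)) + h j false)) + h j false - h j true by ring.
  rewrite D0; ring.
pose h' j b := - k j * X n j b.
pose C' := \sum_(j < d) (k j * X n.+1 j false + h j false) + C.
have H' : forall e, \sum_(t < n) \sum_(j < d) A t j e * (X t.+1 j (e t.+1 j) - X t j (e t j))
     + \sum_(j < d) h' j (e n j) + C' = 0.
  move=> e; have He := H e; rewrite big_ord_recr /= in He; rewrite /C' /h'.
  suff : \sum_(j < d) A n j e * (X n.+1 j (e n.+1 j) - X n j (e n j)) + \sum_(j < d) h j (e n.+1 j)
    = \sum_(j < d) - k j * X n j (e n j) + \sum_(j < d) (k j * X n.+1 j false + h j false).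
    by move=> Eq; lra.
  rewrite -!big_split /=; apply: eq_bigr => i _.
  rewrite Hk //.
  case: (e n.+1 i); last by ring.
  have hXj := hX n.+1 i.
  have : k i * (X n.+1 i true - X n.+1 i false) = h i false - h i true.
    by rewrite /k mulfVK // subr_eq0.
  move=> E; have -> : k i * (X n.+1 i true - X n i (e n i)) = k i * (X n.+1 i true - X n.+1 i false) + k i * X n.+1 i false - k i * X n i (e n i) by ring.
  rewrite E; ring.
have [IA [Ih Is]] := IH h' C' H'.
have k0 : forall j, (j < d)%N -> k j = 0.
  move=> j hj; have := Ih j hj; rewrite /h' => /eqP; rewrite -subr_eq0.
  rewrite -mulrBr mulf_eq0 subr_eq0 (negbTE (hX n j)) orbF oppr_eq0 => /eqP //.
split.
  move=> t j e; rewrite ltnS leq_eqVlt => /orP [/eqP -> hj|ht hj]; last exact: IA.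
  by rewrite Hk // k0.
split.
  move=> j hj; have := k0 j hj; rewrite /k => /eqP; rewrite mulf_eq0 invr_eq0 !subr_eq0.
  by rewrite (negbTE (hX n.+1 j)) orbF => /eqP ->.
move: Is; rewrite /C' /h'.
have -> : \sum_(j < d) - k j * X n j false = 0.
  by apply: big1 => i _; rewrite k0 // oppr0 mul0r.
have -> : \sum_(j < d) (k j * X n.+1 j false + h j false) = \sum_(j < d) h j false.
  by apply: eq_bigr => i _; rewrite k0 // mul0r add0r.
by rewrite add0r.
Qed.

Lemma inord_le n' t : (val (@inord n' t) <= t)%N.
Proof. by rewrite /inord /insubd; case: insubP => [v _ ->|_] //=. Qed.

Theorem lemma4p1 (R : realType) (d T : nat) (hd : (1 <= d)%N) (hT : (2 <= T)%N)
  (x0 x1 : 'I_T -> 'I_d -> R)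
  (hx : forall (t : 'I_T) (j : 'I_d), x0 t j != x1 t j)
  (u u' : forall t : 'I_T.-1, 'I_d -> {ffun 'I_t.+1 -> {ffun 'I_d -> bool}} -> R)
  (w10 w11 w10' w11' : R) (w w' : 'I_d.-1 -> R) :
  (forall e : {ffun 'I_T -> {ffun 'I_d -> bool}},
     LT x0 x1 (Ordinal (pred_lt (ltnW hT))) (Ordinal hd) u w10 w11 w e
     = LT x0 x1 (Ordinal (pred_lt (ltnW hT))) (Ordinal hd) u' w10' w11' w' e) ->
  (forall (t : 'I_T.-1) (j : 'I_d) (et : {ffun 'I_t.+1 -> {ffun 'I_d -> bool}}),
     u t j et = u' t j et)
  /\ w10 = w10' /\ w11 = w11' /\ (forall j : 'I_d.-1, w j = w' j).
Proof.
move=> H.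
case: T hT x0 x1 hx u u' H => [|[|n]] // hT x0 x1 hx u u' H.
case: d hd x0 x1 hx u u' w w' H => [|d'] // hd x0 x1 hx u u' w w' H.
pose E (e : nat -> nat -> bool) : {ffun 'I_n.+2 -> {ffun 'I_d'.+1 -> bool}} :=
  [ffun s => [ffun i => e (val s) (val i)]].
pose A t j (e : nat -> nat -> bool) := u (@inord n t : 'I_(n.+2).-1) (inord j) (trunc (@inord n t : 'I_(n.+2).-1) (E e))
   - u' (@inord n t : 'I_(n.+2).-1) (inord j) (trunc (@inord n t : 'I_(n.+2).-1) (E e)).
pose X t j b := xsel x0 x1 b (inord t) (inord j).
pose W j := oapp (fun i : 'I_d' => w i - w' i) 0 (insub j).
pose h j (b : bool) := if j is j'.+1 then (nat_of_bool b)%:R * W j'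
                       else (if b then w11 - w11' else w10 - w10').
have hX : forall t j, X t j true != X t j false by move=> t j; rewrite /X /xsel eq_sym.
have loc : forall t j e e', (forall s i, (s <= t)%N -> e s i = e' s i) -> A t j e = A t j e'.
  move=> t j e e' he; rewrite /A.
  have -> : trunc (@inord n t : 'I_(n.+2).-1) (E e) = trunc (@inord n t : 'I_(n.+2).-1) (E e'); last by [].
  apply/ffunP => s; rewrite !ffunE; apply/ffunP => i; rewrite !ffunE /=.
  apply: he; apply: leq_trans (inord_le n t).
  exact: (ltn_ord s).
have Heq : forall e, \sum_(t < n.+1) \sum_(j < d'.+1) A t j e * (X t.+1 j (e t.+1 j) - X t j (e t j))
     + \sum_(j < d'.+1) h j (e n.+1 j) + 0 = 0.
  move=> e; have He := H (E e); move/eqP: He; rewrite -subr_eq0 => /eqP He.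
  rewrite /LT in He.
  have S1 : \sum_(t < n.+1) \sum_(j < d'.+1) A t j e * (X t.+1 j (e t.+1 j) - X t j (e t j))
    = \sum_(t : 'I_(n.+2).-1) \sum_(j : 'I_d'.+1) u t j (trunc t (E e)) *
       (xsel x0 x1 (E e (succ_ord t) j) (succ_ord t) j
        - xsel x0 x1 (E e (pred_widen t) j) (pred_widen t) j)
      - \sum_(t : 'I_(n.+2).-1) \sum_(j : 'I_d'.+1) u' t j (trunc t (E e)) *
       (xsel x0 x1 (E e (succ_ord t) j) (succ_ord t) j
        - xsel x0 x1 (E e (pred_widen t) j) (pred_widen t) j).
    rewrite -sumrB; apply: eq_bigr => t _; rewrite -sumrB; apply: eq_bigr => j _.
    rewrite /A /X !inord_val -mulrBl !ffunE /=.
    have -> : succ_ord (n:=n.+2) t = inord t.+1 by apply: val_inj; rewrite /= inordK // ltnS.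
    have -> : pred_widen (n:=n.+2) t = inord t by apply: val_inj; rewrite /= inordK //; exact: ltnW (ltn_ord t).
    by [].
  have S2 : h 0%N (e n.+1 0%N) = (if E e (Ordinal (pred_lt (ltnW hT))) (Ordinal hd) then w11 else w10)
     - (if E e (Ordinal (pred_lt (ltnW hT))) (Ordinal hd) then w11' else w10').
    by rewrite /h !ffunE /=; case: (e n.+1 0%N).
  have S3 : \sum_(j < d') h j.+1 (e n.+1 j.+1)
     = \sum_(j : 'I_d') (nat_of_bool (E e (Ordinal (pred_lt (ltnW hT))) (succ_ord (n:=d'.+1) j)))%:R * w j
     - \sum_(j : 'I_d') (nat_of_bool (E e (Ordinal (pred_lt (ltnW hT))) (succ_ord (n:=d'.+1) j)))%:R * w' j.
    rewrite -sumrB; apply: eq_bigr => j _.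
    by rewrite /h /W valK /= -mulrBr !ffunE.
  rewrite [\sum_(j < d'.+1) h j _]big_ord_recl /=. move: He S1 S2 S3; rewrite /= => He S1 S2 S3. lra.
have [IA [Ih Is]] := @gen_sep R d'.+1 A X hX loc n.+1 h 0 Heq.
split.
  move=> t j et.
  pose e s i := if (s <= t)%N then et (inord s) (inord i) else false.
  have := IA (val t) (val j) e (ltn_ord t) (ltn_ord j).
  rewrite /A !inord_val.
  have -> : trunc t (E e) = et; last by move/eqP; rewrite subr_eq0 => /eqP.
  apply/ffunP => s; apply/ffunP => i; rewrite !ffunE /=.
  have hs : (s <= t)%N := ltn_ord s.
  rewrite /e hs.
  by congr (et _ _); apply: val_inj; rewrite /= inordK.
have h0 := Ih 0%N isT; rewrite /h in h0.
move: Is; rewrite big_ord_recl addr0.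
have -> : \sum_(i < d') h (bump 0 i) false = 0 by apply: big1 => i _; rewrite /h /= mul0r.
rewrite addr0 /h /= => /eqP; rewrite subr_eq0 => /eqP e0.
split; first by [].
split; first by apply/eqP; rewrite -subr_eq0 h0 e0 subrr.
move=> j; have := Ih j.+1 (ltn_ord j); rewrite /h /W valK /= mul1r mul0r.
by move/eqP; rewrite subr_eq0 => /eqP.
Qed.
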